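(* Let $\beta=\prod_{j=1}^{r}\sigma_1^{a_j}\sigma_2^{b_j}\in B_3$ with $r\ge 2$ and all $a_j,b_j\ge 1$. Suppose either (1) $\beta$ has two or more trivial syllables, or (2) $\beta$ has a trivial syllable whose two adjacent syllables (taken cyclically, so that $\sigma_1^{a_1}$ and $\sigma_2^{b_r}$ are adjacent) have minimum exponent equal to $2$. Then $\beta$ is conjugate to $[1,3]^{3a}\gamma$ for some integer $a\ge 0$ and some $\gamma\in B_3$ with $\rho(\gamma)<r$. In case (2), or when $\beta$ has two isolated trivial syllables, one has $a\ge 1$. Moreover, $\gamma$ may be chosen as $\gamma=\prod_{j=1}^{s}\sigma_1^{c_j}\sigma_2^{d_j}$ with $s<r$ and $c_j,d_j\ge 2$ for all $j\ge 2$, where: if $s\ge 2$ then $c_1,d_1\ge 1$ and $\gamma$ may be chosen to have either no trivial syllables, or exactly one trivial syllable whose two adjacent syllables each have exponent at least three; if $s=1$ then $c_1,d_1\ge 0$; and if $s=0$ then $\gamma=1$.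
   Context: $B_3$ is the 3-strand braid group with generators $\sigma_1,\sigma_2$; $[1,3]=\sigma_1\sigma_2$. For a word $\beta=\prod_{j=1}^{r}\sigma_1^{e_{2j-1}}\sigma_2^{e_{2j}}$ with $r\ge 1$ and all $e_k\neq 0$, each factor $\sigma_i^{e_k}$ is a syllable; a syllable is trivial if its exponent is $1$; a trivial syllable is isolated if both adjacent syllables (viewed cyclically) are non-trivial. The rank of such $\beta$ is $\rho(\beta)=r$; the identity has rank $0$ and $\sigma_i^a$ ($a\neq 0$) has rank $1$. *)

(* Defs.v *)
(* The braid group B_3 is defined by its
   standard presentation: words in sigma_1^{+-1}, sigma_2^{+-1} modulo the
   congruence generated by free cancellation and the braid relation
   s1 s2 s1 = s2 s1 s2. *)
From mathcomp Require Import all_boot.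
From Stdlib Require Import Relations.
Set Implicit Arguments. Unset Strict Implicit. Unset Printing Implicit Defensive.

Inductive gen := S1 | S2.
Definition gen_eqb (x y : gen) := match x, y with S1,S1 | S2,S2 => true | _,_ => false end.

(* a letter is (generator, positive?) ; (g,true) = sigma_g, (g,false) = sigma_g^-1 *)
Definition letter := (gen * bool)%type.
Definition word := seq letter.

Definition inv_word (w : word) : word := rev (map (fun l => (l.1, ~~ l.2)) w).

Inductive braid_step : word -> word -> Prop :=
| bs_free (u v : word) (g : gen) (b : bool) :
    braid_step (u ++ [:: (g, b); (g, ~~ b)] ++ v) (u ++ v)
| bs_rel (u v : word) :
    braid_step (u ++ [:: (S1, true); (S2, true); (S1, true)] ++ v)
               (u ++ [:: (S2, true); (S1, true); (S2, true)] ++ v).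

Definition braid_eq : word -> word -> Prop := clos_refl_sym_trans word braid_step.

Definition braid_conj (x y : word) : Prop :=
  exists w : word, braid_eq (w ++ x ++ inv_word w) y.

Definition spow (g : gen) (n : nat) : word := nseq n (g, true).

Definition syll_word (p : seq (nat * nat)) : word :=
  flatten [seq spow S1 x.1 ++ spow S2 x.2 | x <- p].

Definition twist13_pow (n : nat) : word := flatten (nseq n [:: (S1, true); (S2, true)]).

(* cyclic sequence of syllable exponents a_1 b_1 a_2 b_2 ... a_r b_r *)
Definition exps (p : seq (nat * nat)) : seq nat := flatten [seq [:: x.1; x.2] | x <- p].

Definition prev_exp (e : seq nat) (k : nat) : nat := nth 0 e ((k + size e - 1) %% size e).
Definition next_exp (e : seq nat) (k : nat) : nat := nth 0 e ((k + 1) %% size e).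

Definition trivial_syll (e : seq nat) (k : nat) : bool := (k < size e) && (nth 0 e k == 1).
Definition isolated_syll (e : seq nat) (k : nat) : bool :=
  [&& trivial_syll e k, prev_exp e k != 1 & next_exp e k != 1].
Definition num_trivial (e : seq nat) : nat := count (pred1 1) e.

(* Main.v *)
Require Import Defs.
From mathcomp Require Import all_boot zify.
From Stdlib Require Import Relations Classical.
Set Implicit Arguments. Unset Strict Implicit. Unset Printing Implicit Defensive.

Lemma beq_refl x : braid_eq x x. Proof. exact: rst_refl. Qed.
Lemma beq_sym x y : braid_eq x y -> braid_eq y x. Proof. exact: rst_sym. Qed.
Lemma beq_trans x y z : braid_eq x y -> braid_eq y z -> braid_eq x z.
Proof. exact: rst_trans. Qed.

Lemma step_ctx l r u v : braid_step u v -> braid_step (l ++ u ++ r) (l ++ v ++ r).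
Proof.
case=> [u0 v0 g b|u0 v0].
- have -> : l ++ (u0 ++ [:: (g, b); (g, ~~ b)] ++ v0) ++ r =
            (l ++ u0) ++ [:: (g, b); (g, ~~ b)] ++ (v0 ++ r) by rewrite !catA.
  have -> : l ++ (u0 ++ v0) ++ r = (l ++ u0) ++ (v0 ++ r) by rewrite !catA.
  exact: bs_free.
- have -> : l ++ (u0 ++ [:: (S1, true); (S2, true); (S1, true)] ++ v0) ++ r =
            (l ++ u0) ++ [:: (S1, true); (S2, true); (S1, true)] ++ (v0 ++ r) by rewrite !catA.
  have -> : l ++ (u0 ++ [:: (S2, true); (S1, true); (S2, true)] ++ v0) ++ r =
            (l ++ u0) ++ [:: (S2, true); (S1, true); (S2, true)] ++ (v0 ++ r) by rewrite !catA.
  exact: bs_rel.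
Qed.

Lemma beq_ctx l r u v : braid_eq u v -> braid_eq (l ++ u ++ r) (l ++ v ++ r).
Proof.
elim=> [x y H|x|x y _ IH|x y z _ IH1 _ IH2].
- exact/rst_step/step_ctx.
- exact: beq_refl.
- exact: beq_sym.
- exact: beq_trans IH1 IH2.
Qed.

Lemma beq_catl l u v : braid_eq u v -> braid_eq (l ++ u) (l ++ v).
Proof. by move=> H; have := beq_ctx l [::] H; rewrite !cats0. Qed.
Lemma beq_catr r u v : braid_eq u v -> braid_eq (u ++ r) (v ++ r).
Proof. by move=> H; have := beq_ctx [::] r H. Qed.
Lemma beq_cat u v u' v' : braid_eq u u' -> braid_eq v v' -> braid_eq (u ++ v) (u' ++ v').
Proof. move=> H1 H2; apply: beq_trans (beq_catr _ H1) (beq_catl _ H2). Qed.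

Lemma beq_cancel w : braid_eq (w ++ inv_word w) [::].
Proof.
elim: w => [|[g b] w IH] //=; first exact: beq_refl.
rewrite /inv_word /= rev_cons -cats1 -/(inv_word w).
apply: beq_trans (_ : braid_eq ((g,b) :: [::] ++ [:: (g, ~~ b)]) [::]).
  have := beq_ctx [:: (g,b)] [:: (g, ~~ b)] IH.
  by rewrite /= -catA.
apply: rst_step; exact: (bs_free [::] [::] g b).
Qed.

Lemma inv_wordK w : inv_word (inv_word w) = w.
Proof.
rewrite /inv_word map_rev revK -map_comp -[RHS]map_id; apply: eq_map => -[g b] /=.
by rewrite negbK.
Qed.

Lemma inv_word_cat u v : inv_word (u ++ v) = inv_word v ++ inv_word u.
Proof. by rewrite /inv_word map_cat rev_cat. Qed.

Lemma beq_cancel' w : braid_eq (inv_word w ++ w) [::].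
Proof. by have := beq_cancel (inv_word w); rewrite inv_wordK. Qed.

Lemma cj_refl x : braid_conj x x.
Proof. by exists [::]; rewrite /= /inv_word /= cats0; exact: beq_refl. Qed.

Lemma cj_beqr x y z : braid_conj x y -> braid_eq y z -> braid_conj x z.
Proof. by case=> w H H'; exists w; exact: beq_trans H H'. Qed.

Lemma cj_beql x y z : braid_eq x y -> braid_conj y z -> braid_conj x z.
Proof. by move=> H [w Hw]; exists w; apply: beq_trans Hw; exact: beq_ctx. Qed.

Lemma beq_cj x y : braid_eq x y -> braid_conj x y.
Proof. by move=> H; apply: cj_beql H (cj_refl _). Qed.

Lemma cj_trans x y z : braid_conj x y -> braid_conj y z -> braid_conj x z.
Proof.
case=> w1 H1 [w2 H2]; exists (w2 ++ w1).
apply: beq_trans H2; rewrite inv_word_cat -!catA.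
by apply: beq_catl; rewrite !catA; apply: beq_catr; rewrite -!catA.
Qed.

Lemma cj_rot u v : braid_conj (u ++ v) (v ++ u).
Proof.
exists (inv_word u); rewrite inv_wordK !catA.
have := beq_catr (v ++ u) (beq_cancel' u); rewrite /= !catA; exact.
Qed.

Definition flip g := match g with S1 => S2 | S2 => S1 end.
Definition pos g : letter := (g, true).
Definition delta : word := [:: pos S1; pos S2; pos S1].
Definition tau (w : word) : word := map (fun l => (flip l.1, l.2)) w.
Definition dpow k := flatten (nseq k delta).
Fixpoint alt g (e : seq nat) : word :=
  if e is x :: e' then spow g x ++ alt (flip g) e' else [::].
Definition sem k g e := dpow k ++ alt g e.
Definition positive (w : word) := all (fun l : letter => l.2) w.

Lemma flipK g : flip (flip g) = g. Proof. by case: g. Qed.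
Lemma iter_flip n g : iter n flip g = if odd n then flip g else g.
Proof. by elim: n => //= n ->; case: (odd n) => //=; rewrite flipK. Qed.

Lemma tauK u : tau (tau u) = u.
Proof. by rewrite /tau -map_comp -[RHS]map_id; apply: eq_map => -[g b] /=; rewrite flipK. Qed.
Lemma tau_cat u v : tau (u ++ v) = tau u ++ tau v. Proof. exact: map_cat. Qed.
Lemma positive_cat u v : positive (u ++ v) = positive u && positive v.
Proof. exact: all_cat. Qed.
Lemma positive_tau u : positive (tau u) = positive u.
Proof. by rewrite /positive all_map. Qed.
Lemma positive_iter k u : positive (iter k tau u) = positive u.
Proof. by elim: k => //= k <-; rewrite positive_tau. Qed.

Lemma tau_spow g n : tau (spow g n) = spow (flip g) n.
Proof. by rewrite /tau /spow map_nseq. Qed.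
Lemma spowD g a b : spow g (a + b) = spow g a ++ spow g b.
Proof. by rewrite /spow nseqD. Qed.
Lemma positive_spow g n : positive (spow g n).
Proof. by elim: n. Qed.
Lemma positive_alt g e : positive (alt g e).
Proof. by elim: e g => //= x e IH g; rewrite positive_cat positive_spow IH. Qed.
Lemma tau_alt g e : tau (alt g e) = alt (flip g) e.
Proof. by elim: e g => //= x e IH g; rewrite tau_cat tau_spow IH. Qed.
Lemma iter_tau_alt k g e : iter k tau (alt g e) = alt (iter k flip g) e.
Proof. by elim: k => //= k ->; rewrite tau_alt. Qed.
Lemma iter_tau_spow k g n : iter k tau (spow g n) = spow (iter k flip g) n.
Proof. by elim: k => //= k ->; rewrite tau_spow. Qed.
Lemma alt_cat g e1 e2 : alt g (e1 ++ e2) = alt g e1 ++ alt (iter (size e1) flip g) e2.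
Proof.
elim: e1 g => //= x e1 IH g; rewrite IH catA; congr (_ ++ alt _ _).
by rewrite -iterSr.
Qed.

Lemma delta_swap g : braid_eq (delta ++ [:: pos g]) (pos (flip g) :: delta).
Proof.
case: g => /=.
- apply: rst_step; exact: (bs_rel [::] [:: (S1, true)]).
- apply: rst_sym; apply: rst_step; exact: (bs_rel [:: (S1, true)] [::]).
Qed.

Lemma delta_comm u : positive u -> braid_eq (delta ++ u) (tau u ++ delta).
Proof.
elim: u => [|[g b] u IH]; first by move=> _; rewrite cats0; exact: beq_refl.
move=> /andP [Hb /IH {}IH]; have {Hb}-> : b = true by exact: Hb.
rewrite -cat1s catA; apply: beq_trans (beq_catr _ (delta_swap g)) _.
rewrite tau_cat -catA.
exact: (beq_catl [:: pos (flip g)] IH).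
Qed.

Lemma delta_comm' u : positive u -> braid_eq (u ++ delta) (delta ++ tau u).
Proof.
move=> Hu; apply: beq_sym; have := delta_comm (u := tau u); rewrite tauK positive_tau.
exact.
Qed.

Lemma dpowS k : dpow k.+1 = delta ++ dpow k. Proof. by []. Qed.
Lemma dpowD m n : dpow (m + n) = dpow m ++ dpow n.
Proof. by rewrite /dpow nseqD flatten_cat. Qed.
Lemma dpow_delta k : dpow k ++ delta = delta ++ dpow k.
Proof. by rewrite -dpowS -addn1 dpowD. Qed.

Lemma dpow_comm k u : positive u -> braid_eq (dpow k ++ u) (iter k tau u ++ dpow k).
Proof.
elim: k u => [|k IH] u Hu; first by rewrite /= cats0; exact: beq_refl.
rewrite dpowS -catA; apply: beq_trans (beq_catl _ (IH _ Hu)) _.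
rewrite catA; apply: beq_trans (beq_catr _ (delta_comm _)) _.
  by rewrite positive_iter.
rewrite -catA iterS; exact: beq_refl.
Qed.

Lemma cj_dpow_rot k u v : positive u ->
  braid_conj (dpow k ++ u ++ v) (dpow k ++ v ++ iter k tau u).
Proof.
move=> Hu; rewrite catA; apply: cj_trans (cj_rot _ _) _.
apply: cj_beql (beq_catl _ (dpow_comm k Hu)) _.
rewrite catA; exact: cj_rot.
Qed.

Lemma iter_tau_even a u : iter (2 * a) tau u = u.
Proof. by elim: a => [|a IH] //; rewrite mulnS add2n /= tauK IH. Qed.

Lemma twist_dpow a : braid_eq (twist13_pow (3 * a)) (dpow (2 * a)).
Proof.
elim: a => [|a IH]; first exact: beq_refl.
rewrite /twist13_pow !mulnS /= -/(twist13_pow (3 * a)).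
have -> : dpow (2 + 2 * a) = delta ++ delta ++ dpow (2 * a) by [].
apply: (@beq_cat [:: (S1,true);(S2,true);(S1,true);(S2,true);(S1,true);(S2,true)]
   (twist13_pow (3*a)) (delta ++ delta) (dpow (2*a)) _ IH).
apply: rst_sym; apply: rst_step; exact: (bs_rel delta [::]).
Qed.

Definition Inv k (e : seq nat) := all (fun x => 0 < x) e /\ (size e <= 1 \/ ~~ odd (size e + k)).

Lemma sem_rot1 k g x e : ~~ odd (size (x :: e) + k) ->
  braid_conj (sem k g (x :: e)) (sem k (flip g) (rcons e x)).
Proof.
move=> Hp; rewrite /sem; change (alt g (x :: e)) with (spow g x ++ alt (flip g) e).
apply: cj_trans (cj_dpow_rot k (alt (flip g) e) (positive_spow g x)) _.
rewrite -cats1 alt_cat /= cats0 iter_tau_spow.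
suff -> : iter (size e) flip (flip g) = iter k flip g by exact: cj_refl.
move: Hp; rewrite !iter_flip /= oddD negbK.
by case: (odd (size e)); case: (odd k); rewrite //= flipK.
Qed.

Lemma sem_rot k g e i : i <= size e -> ~~ odd (size e + k) ->
  braid_conj (sem k g e) (sem k (iter i flip g) (rot i e)).
Proof.
move=> + Hp; elim: i => [|i IH] Hi; first by rewrite rot0; exact: cj_refl.
apply: cj_trans (IH (ltnW Hi)) _.
rewrite rotS //; case E: (rot i e) => [|x e'].
  by move: (size_rot i e); rewrite E /=; lia.
rewrite rot1_cons; apply: sem_rot1.
by rewrite -E size_rot.
Qed.

Lemma nth_rot (s : seq nat) i j : i < size s -> j < size s ->
  nth 0 (rot i s) j = nth 0 s ((i + j) %% size s).
Proof.
move=> Hi Hj; rewrite /rot nth_cat size_drop.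
case: ltnP => Hc.
  by rewrite nth_drop modn_small //; lia.
rewrite nth_take; last by lia.
congr nth.
have -> : i + j = (j - (size s - i)) + size s by lia.
by rewrite modnDr modn_small //; lia.
Qed.

Lemma count_rot (p : pred nat) i (s : seq nat) : count p (rot i s) = count p s.
Proof. by rewrite /rot count_cat addnC -count_cat cat_take_drop. Qed.

Lemma gdelta g : braid_eq [:: pos g; pos (flip g); pos g] delta.
Proof.
case: g; first exact: beq_refl.
apply: rst_sym; apply: rst_step; exact: (bs_rel [::] [::]).
Qed.

Lemma move_beq k g x y rest :
  braid_eq (sem k g [:: x.+1, 1, y.+1 & rest]) (sem k.+1 (flip g) [:: x, y & rest]).
Proof.
rewrite /sem.
change (alt g [:: x.+1, 1, y.+1 & rest]) with (spow g x.+1 ++ [:: pos (flip g)] ++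
  spow (flip (flip g)) y.+1 ++ alt (flip (flip (flip g))) rest).
change (alt (flip g) [:: x, y & rest]) with (spow (flip g) x ++
  spow (flip (flip g)) y ++ alt (flip (flip (flip g))) rest).
rewrite !flipK.
have -> : spow g x.+1 = spow g x ++ [:: pos g] by rewrite -addn1 spowD.
have -> : spow g y.+1 = pos g :: spow g y by [].
set W := spow g y ++ alt (flip g) rest.
have -> : dpow k ++ (spow g x ++ [:: pos g]) ++ ([:: pos (flip g)] ++ (pos g :: W))
   = dpow k ++ spow g x ++ [:: pos g; pos (flip g); pos g] ++ W by rewrite /= -!catA.
apply: beq_trans (beq_catl _ (beq_catl _ (beq_catr _ (gdelta g)))) _.
rewrite (catA (spow g x) delta W).
apply: beq_trans (beq_catl _ (beq_catr _ (delta_comm' (positive_spow g x)))) _.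
rewrite -catA catA dpow_delta -dpowS tau_spow; exact: beq_refl.
Qed.

Lemma alt_cons g x l : alt g (x :: l) = spow g x ++ alt (flip g) l. Proof. by []. Qed.
Lemma spow0 g : spow g 0 = [::]. Proof. by []. Qed.
Lemma alt_nil g : alt g [::] = [::]. Proof. by []. Qed.

Lemma move_local k g x y rest : 0 < x -> 0 < y -> all (fun z => 0 < z) rest ->
  ~~ odd (size rest + 3 + k) ->
  exists g' e', braid_conj (sem k g [:: x, 1, y & rest]) (sem k.+1 g' e') /\
    Inv k.+1 e' /\ size e' < size rest + 3 /\
    ((x = 1 \/ y = 1) -> 1 <= size rest -> size e' <= size rest) /\
    (2 <= x -> 2 <= y -> e' = [:: x.-1, y.-1 & rest]).
Proof.
case: x => // x _; case: y => // y _ Hr Hp.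
have H1 := beq_cj (move_beq k g x y rest).
case: x H1 => [|x] H1; case: y H1 => [|y] H1.
-
  exists (flip g), rest; split.
    by apply: cj_trans H1 _; rewrite /sem !alt_cons spow0 !cat0s !flipK; exact: cj_refl.
  split; last by split; [lia| split; [lia| move=> ? ?; lia]].
  split=> //; right; move: Hp; rewrite !oddD /=.
  by case: (odd (size rest)); case: (odd k).
-
  case/lastP: rest Hr Hp H1 => [|r' z] Hr Hp H1.
    exists g, [:: y.+1]; split.
      by apply: cj_trans H1 _; rewrite /sem /= flipK; exact: cj_refl.
    by split; [split=> //; left | split; [|split]] => //; move=> ?; lia.
  set g2 := iter k.+1 flip g.
  exists g2, ((z + y.+1) :: r'); split.
    apply: cj_trans H1 _.
    have -> : sem k.+1 (flip g) [:: 0, y.+1 & rcons r' z]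
      = dpow k.+1 ++ alt g (y.+1 :: r') ++ spow (iter (size r').+1 flip g) z.
      rewrite /sem alt_cons spow0 cat0s flipK -cats1 -cat_cons alt_cat.
      by rewrite (alt_cons _ z) alt_nil cats0 -catA.
    apply: cj_trans (cj_dpow_rot _ _ (positive_alt _ _)) _.
    rewrite iter_tau_alt -/g2 /sem !alt_cons spowD -!catA.
    suff -> : iter (size r').+1 flip g = g2 by exact: cj_refl.
    move: Hp; rewrite /g2 !iter_flip size_rcons !oddD /=.
    by case: (odd (size r')); case: (odd k).
  move: Hr; rewrite all_rcons => /andP [Hz Hr'].
  split.
    split; first by apply/andP; split => //; lia.
    right; move: Hp; rewrite size_rcons /= !oddD /=.
    by case: (odd (size r')); case: (odd k).
  by rewrite size_rcons /=; split; [lia | split; [lia| move=> ?; lia]].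
-
  case: rest Hr Hp H1 => [|v r''] Hr Hp H1.
    exists (flip g), [:: x.+1]; split.
      by apply: cj_trans H1 _; rewrite /sem /= !cats0; exact: cj_refl.
    by split; [split=> //; left | split; [|split]] => //; move=> ?; lia.
  exists (flip g), ((x.+1 + v) :: r''); split.
    apply: cj_trans H1 _; rewrite /sem /= !flipK spowD -catA; exact: cj_refl.
  move: Hr => /= /andP [Hv Hr''].
  split.
    split; first by apply/andP; split => //; lia.
    right; move: Hp; rewrite /= !oddD /=.
    by case: (odd (size r'')); case: (odd k).
  by rewrite /=; split; [lia | split; [lia| move=> ?; lia]].
- exists (flip g), [:: x.+1, y.+1 & rest]; split => //.
  split; last by split; [rewrite /=; lia | split; [move=> [] ?; lia | by []]].
  split; first by rewrite /= Hr.
  right; move: Hp; rewrite /= !oddD /=.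
  by case: (odd (size rest)); case: (odd k).
Qed.

Lemma move_at k g e t : Inv k e -> 3 <= size e -> trivial_syll e t ->
  exists g' e', braid_conj (sem k g e) (sem k.+1 g' e') /\ Inv k.+1 e' /\ size e' < size e /\
  ((prev_exp e t = 1 \/ next_exp e t = 1) -> 4 <= size e -> size e' + 3 <= size e) /\
  (2 <= prev_exp e t -> 2 <= next_exp e t -> size e' + 1 = size e) /\
  (2 <= prev_exp e t -> 2 <= next_exp e t ->
    (prev_exp e t = 2 \/ next_exp e t = 2 \/ 2 <= count (pred1 1) e) -> 1 \in e').
Proof.
move=> [Hpos Hpar] Hn /andP [Ht /eqP Ht1].
have {}Hpar : ~~ odd (size e + k) by case: Hpar => // ?; lia.
set i := (t + size e - 1) %% size e.
have Hi : i < size e by rewrite ltn_pmod //; lia.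
have Hrot := @sem_rot k g e i (ltnW Hi) Hpar.
have Hs : size (rot i e) = size e := size_rot _ _.
have N0 : nth 0 (rot i e) 0 = prev_exp e t by rewrite nth_rot ?addn0 ?modn_mod //; lia.
have N1 : nth 0 (rot i e) 1 = 1.
  rewrite nth_rot //; try lia.
  rewrite modnDml; have -> : t + size e - 1 + 1 = t + size e by lia.
  by rewrite modnDr modn_small.
have N2 : nth 0 (rot i e) 2 = next_exp e t.
  rewrite nth_rot //; try lia.
  rewrite modnDml /next_exp; have -> : t + size e - 1 + 2 = (t + 1) + size e by lia.
  by rewrite modnDr.
have Hpos' : all (fun x => 0 < x) (rot i e).
  by apply/allP => z; rewrite mem_rot => /(allP Hpos).
have Hc : count (pred1 1) (rot i e) = count (pred1 1) e := count_rot _ _ _.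
rewrite -N0 -N2.
move: Hrot Hs N1 Hpos' Hc.
case: (rot i e) => [|x [|y1 [|y rest]]] Hrot Hs N1 Hpos' Hc; try (simpl in Hs; lia).
simpl in N1; subst y1.
move: Hpos' => /= /andP [Hx /andP [Hy Hrest]].
have Hpar' : ~~ odd (size rest + 3 + k) by move: Hpar; rewrite -Hs /= addn3.
have [g' [e' [H1 [H2 [H3 [H4 H5]]]]]] := move_local (iter i flip g) Hx Hy Hrest Hpar'.
exists g', e'; split; first exact: cj_trans Hrot H1.
split=> //; split; first by rewrite -Hs /=; lia.
split; first by move=> Hxy H4n; have := H4 Hxy; rewrite -Hs /= in H4n *; lia.
split; first by move=> Hx2 Hy2; rewrite (H5 Hx2 Hy2) -Hs /=; lia.
move=> /= Hx2 Hy2 Hor; rewrite (H5 Hx2 Hy2).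
case: Hor => [->|[->|Hcnt]]; rewrite ?inE ?eqxx ?orbT //.
apply/orP; right; apply/orP; right.
rewrite -has_pred1 has_count.
move: Hc; rewrite /=.
have -> : (x == 1) = false by apply/eqP; lia.
have -> : (y == 1) = false by apply/eqP; lia.
by rewrite /=; lia.
Qed.

Lemma loop k g e : Inv k e -> exists m g' e',
  braid_conj (sem k g e) (sem (k + m) g' e') /\ Inv (k + m) e' /\
  size e' + m <= size e /\ (size e' <= 2 \/ 1 \notin e').
Proof.
move: {2}(size e) (leqnn (size e)) => N; elim: N k g e => [|N IH] k g e Hs HI.
  exists 0, g, e; rewrite addn0; split; first exact: cj_refl.
  by split=> //; split; [lia | left; lia].
have [Hterm|Hnt] := boolP ((size e <= 2) || (1 \notin e)).
  exists 0, g, e; rewrite addn0; split; first exact: cj_refl.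
  split=> //; split; first lia.
  by case/orP: Hterm; [left | right].
move: Hnt; rewrite negb_or -ltnNge negbK => /andP [H3 H1].
have Ht : trivial_syll e (index 1 e) by rewrite /trivial_syll index_mem H1 nth_index.
have [g1 [e1 [C1 [I1 [Sz _]]]]] := @move_at k g e (index 1 e) HI H3 Ht.
have [m [g2 [e2 [C2 [I2 [Sz2 T2]]]]]] := IH k.+1 g1 e1 (ltnSE (leq_trans Sz Hs)) I1.
exists m.+1, g2, e2; rewrite addnS -addSn; split; first exact: cj_trans C1 C2.
by split=> //; split=> //; lia.
Qed.

Fixpoint pairs (l : seq nat) : seq (nat * nat) :=
  match l with a :: b :: l' => (a, b) :: pairs l' | _ => [::] end.

Lemma pairs_prop h l : size l = h.*2 ->
  [/\ syll_word (pairs l) = alt S1 l, exps (pairs l) = l, size (pairs l) = h &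
      forall x, x \in pairs l -> x.1 \in l /\ x.2 \in l].
Proof.
elim: h l => [|h IH] l Hs.
  by case: l Hs => // _; split.
case: l Hs => [|a [|b l]] Hs; try (by move: Hs; rewrite doubleS).
have Hs' : size l = h.*2 by move: Hs; rewrite doubleS /= => -[].
have [E1 E2 E3 E4] := IH l Hs'.
split.
- by rewrite /syll_word /= -/(syll_word (pairs l)) E1 -catA.
- by rewrite /exps /= -/(exps (pairs l)) E2.
- by rewrite /= E3.
- move=> x; rewrite inE => /orP [/eqP -> | /E4 [Hx1 Hx2]] /=.
    by rewrite !inE !eqxx /= orbT.
  by rewrite !inE Hx1 Hx2 !orbT.
Qed.

Definition Qgood (q : seq (nat * nat)) :=
  (forall j, 1 <= j < size q -> 2 <= (nth (0,0) q j).1 /\ 2 <= (nth (0,0) q j).2) /\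
  (2 <= size q ->
       1 <= (nth (0,0) q 0).1 /\ 1 <= (nth (0,0) q 0).2 /\
       (num_trivial (exps q) = 0 \/
        (num_trivial (exps q) = 1 /\
         forall k, trivial_syll (exps q) k ->
           3 <= prev_exp (exps q) k /\ 3 <= next_exp (exps q) k))).

Lemma qgood_small q : size q <= 1 -> Qgood q.
Proof. by move=> H; split=> [j /andP [H1 H2]|H2]; lia. Qed.

Lemma qgood_pairs h l : size l = h.*2 -> all (fun x => 2 <= x) l -> Qgood (pairs l).
Proof.
move=> Hs Ha; have [_ E2 _ E4] := pairs_prop Hs.
have Hx : forall x, x \in pairs l -> 2 <= x.1 /\ 2 <= x.2.
  by move=> x /E4 [/(allP Ha) ? /(allP Ha) ?].
split.
  by move=> j /andP [_ Hj]; apply: Hx; exact: mem_nth.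
move=> H2; have [H01 H02] := Hx _ (mem_nth (0,0) (ltnW H2)).
split; first exact: ltnW H01. split; first exact: ltnW H02.
left; rewrite /num_trivial E2.
apply/eqP; rewrite -leqn0 leqNgt -has_count has_pred1.
by apply/negP => /(allP Ha).
Qed.

Lemma norm_g k g e : ~~ odd (size e + k) -> 1 <= size e ->
  exists e1, braid_conj (sem k g e) (sem k S1 e1) /\ size e1 = size e /\ e1 =i e.
Proof.
move=> Hp H1; case: g.
  by exists e; split; [exact: cj_refl | split].
exists (rot 1 e); split; first exact: (@sem_rot k S2 e 1 H1 Hp).
by split; [exact: size_rot | exact: mem_rot].
Qed.

Lemma spowSr g n : spow g n.+1 = spow g n ++ [:: pos g].
Proof. by rewrite -addn1 spowD. Qed.


Lemma syll_cons x y q : syll_word ((x, y) :: q) = spow S1 x ++ spow S2 y ++ syll_word q.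
Proof. by rewrite /syll_word /= catA. Qed.
Lemma exps_cons x y q : exps ((x, y) :: q) = x :: y :: exps q.
Proof. by []. Qed.

Lemma ext_even a e : all (fun x => 0 < x) e -> (size e <= 2 \/ 1 \notin e) -> ~~ odd (size e) ->
  exists q, braid_conj (dpow (2 * a) ++ alt S1 e) (dpow (2 * a) ++ syll_word q) /\
    size q <= (size e + 1)./2 /\ Qgood q.
Proof.
move=> Hpos Ht Ho.
set h := (size e)./2.
have He : size e = h.*2 by rewrite -[LHS]odd_double_half (negbTE Ho).
have [P1 P2 P3 P4] := pairs_prop He.
exists (pairs e); split; first by rewrite P1; exact: cj_refl.
split; first by rewrite P3 He -!divn2 -mul2n; lia.
case: Ht => Ht.
  by apply: qgood_small; rewrite P3; move: Ht; rewrite He -mul2n; lia.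
apply: (qgood_pairs He); apply/allP => x Hx.
have := allP Hpos x Hx.
case: (x =P 1) => [E|Hne]; first by rewrite -E Hx in Ht.
by lia.
Qed.

Lemma ext_odd a e : all (fun x => 1 < x) e -> 3 <= size e -> odd (size e) ->
  exists q, braid_conj (dpow (2 * a) ++ delta ++ alt S1 e) (dpow (2 * a) ++ syll_word q) /\
    size q <= (size e + 2)./2 /\ Qgood q.
Proof.
case: e => [|e0 [|m1 l]] // Ha Hs Ho.
case/lastP: l Ha Hs Ho => [|mid en] Ha Hs Ho; first by [].
have Hsz : size [:: e0, m1 & rcons mid en] = (size mid).+3 by rewrite /= size_rcons.
rewrite Hsz in Hs Ho *.
set h := (size mid)./2.
have He : size mid = h.*2 by rewrite -[LHS]odd_double_half; move: Ho => /=; rewrite ?negbK => /negbTE ->.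
have [P1 P2 P3 P4] := pairs_prop He.
have Hin : forall x, x \in [:: e0, m1 & rcons mid en] -> 1 < x by move=> x /(allP Ha).
have He0 : 1 < e0 by apply: Hin; rewrite inE eqxx.
have Hm1 : 1 < m1 by apply: Hin; rewrite !inE eqxx orbT.
have Hen : 1 < en by apply: Hin; rewrite !inE mem_rcons inE eqxx !orbT.
have Hmid : forall x, x \in mid -> 1 < x.
  by move=> x Hx; apply: Hin; rewrite !inE mem_rcons inE Hx !orbT.
have Ealt : alt S1 [:: e0, m1 & rcons mid en] =
   spow S1 e0 ++ spow S2 m1 ++ alt S1 mid ++ spow S1 en.
  rewrite -cats1 -!cat_cons alt_cat iter_flip /= He odd_double /= cats0.
  by rewrite -!catA.
exists ((en.+1, 1) :: (e0.+1, m1) :: pairs mid).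
split.
  have -> : delta ++ alt S1 [:: e0, m1 & rcons mid en] =
     (delta ++ spow S1 e0 ++ spow S2 m1 ++ alt S1 mid) ++ spow S1 en by rewrite Ealt !catA.
  have Hp : positive (delta ++ spow S1 e0 ++ spow S2 m1 ++ alt S1 mid).
    by rewrite !positive_cat !positive_spow positive_alt.
  apply: cj_trans (cj_dpow_rot (2 * a) (spow S1 en) Hp) _.
  rewrite iter_tau_even !syll_cons P1 spowSr -!catA; exact: cj_refl.
split; first by rewrite -!divn2 /= P3 He -mul2n; lia.
split.
  move=> j /andP [Hj1 Hj2]; case: j Hj1 Hj2 => [|[|j]] // _ Hj /=.
    by split; lia.
  have Hq : nth (0,0) (pairs mid) j \in pairs mid by apply: mem_nth; move: Hj => /=; lia.
  by have [/Hmid ? /Hmid ?] := P4 _ Hq; split.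
move=> _ /=; split; first done; split; first done; right.
rewrite !exps_cons P2.
have Hc : count (pred1 1) mid = 0.
  apply/eqP; rewrite -leqn0 leqNgt -has_count has_pred1.
  by apply/negP => /Hmid.
split.
  rewrite /num_trivial /= -/(exps (pairs mid)) ?P2 Hc.
  have -> : (en.+1 == 1) = false by apply/eqP; lia.
  have -> : (e0.+1 == 1) = false by apply/eqP; lia.
  have -> : (m1 == 1) = false by apply/eqP; lia.
  by [].
move=> t /andP [Ht /eqP Ht1].
case: t Ht Ht1 => [|[|[|[|t]]]] /= Ht Ht1; try lia.
  rewrite /prev_exp /next_exp /=.
  rewrite (_ : (1 + (size mid).+4 - 1) = (size mid).+4); last by lia.
  by rewrite modnn /=; split; lia.
have Hts : t < size mid by lia.
by have := Hmid _ (mem_nth 0 Hts); rewrite Ht1.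
Qed.

Lemma all_eqmem (P : pred nat) e1 e : e1 =i e -> all P e -> all P e1.
Proof. by move=> M /allP H; apply/allP => x; rewrite M => /H. Qed.

Lemma extract k g e : Inv k e -> (size e <= 2 \/ 1 \notin e) ->
  exists q, braid_conj (sem k g e) (twist13_pow (3 * k./2) ++ syll_word q) /\
    size q <= (size e + odd k + 1)./2 /\ Qgood q.
Proof.
move=> [Hpos Hpar] Hterm.
set a := k./2.
have Hk : k = 2 * a + odd k by rewrite /a mul2n addnC odd_double_half.
have Ed : dpow k = dpow (2 * a) ++ dpow (odd k) by rewrite {1}Hk dpowD.
suff [q [Hq1 [Hq2 Hq3]]] : exists q, braid_conj (sem k g e) (dpow (2 * a) ++ syll_word q) /\
    size q <= (size e + odd k + 1)./2 /\ Qgood q.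
  by exists q; split => //; apply: cj_beqr Hq1 (beq_catr _ (beq_sym (twist_dpow a))).
have [Hodd|Heven] := boolP (odd k).
-
  have Ed' : dpow k = dpow (2 * a) ++ delta by rewrite Ed Hodd.
  case: e Hpos Hterm Hpar => [|z [|z2 e]] Hpos Hterm Hpar.
  + exists [:: (2,1)]; split; last by split; [done | apply: qgood_small].
    rewrite /sem Ed' -catA.
    apply: cj_trans (cj_dpow_rot (2*a) [:: pos S1] (isT : positive [:: pos S1; pos S2])) _.
    rewrite iter_tau_even; exact: cj_refl.
  + rewrite /sem Ed'; case: g.
    * exists [:: (z.+2, 1)]; split; last by split; [done | apply: qgood_small].
      rewrite -catA.
      apply: cj_trans (cj_dpow_rot (2*a) (pos S1 :: spow S1 z ++ [::])
                        (isT : positive [:: pos S1; pos S2])) _.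
      rewrite iter_tau_even cats0 /syll_word /= cats0.
      have -> : pos S1 :: spow S1 z ++ [:: pos S1; pos S2] =
                [:: (S1,true), (S1,true) & spow S1 z ++ [:: (S2,true)]].
        by rewrite (_ : [:: pos S1; pos S2] = [:: pos S1] ++ [:: pos S2]) // catA -spowSr.
      exact: cj_refl.
    * exists [:: (1, z.+2)]; split; last by split; [done | apply: qgood_small].
      rewrite -catA; apply: cj_beql (beq_catl _ (beq_catr _ (beq_sym (gdelta S2)))) _.
      apply: cj_trans (cj_dpow_rot (2*a) (pos S1 :: pos S2 :: spow S2 z ++ [::])
                        (isT : positive [:: pos S2])) _.
      rewrite iter_tau_even cats0 /syll_word /= cats0 -spowSr.
      exact: cj_refl.
  + have H3 : 3 <= size [:: z, z2 & e].
      case: e Hpar {Hpos Hterm} => [|? ?] //; case=> //.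
      by rewrite /= oddD Hodd.
    set E := [:: z, z2 & e] in Hpos Hterm Hpar H3 *.
    have Hp : ~~ odd (size E + k) by case: Hpar.
    have H1 : 1 \notin E by case: Hterm => //; lia.
    have [e1 [C [Sz M]]] := norm_g g Hp (ltnW (ltnW H3)).
    have Ha : all (fun x => 1 < x) e1.
      apply: (all_eqmem M); apply/allP => x Hx.
      have := allP Hpos x Hx; case: (x =P 1) => [Ex|Hne]; first by rewrite -Ex Hx in H1.
      by lia.
    have Ho1 : odd (size e1) by move: Hp; rewrite Sz oddD Hodd; case: (odd (size E)).
    have [q [Cq [Sq Gq]]] := ext_odd a Ha (ltac:(rewrite Sz; exact: H3)) Ho1.
    exists q; split; last by split => //; rewrite -Sz -addnA.
    apply: cj_trans C _; rewrite /sem Ed' -catA; exact: Cq.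
-
  have Ed' : dpow k = dpow (2 * a) by rewrite Ed (negbTE Heven) cats0.
  case: e Hpos Hterm Hpar => [|z [|z2 e]] Hpos Hterm Hpar.
  + exists [::]; split; last by split; [done | apply: qgood_small].
    rewrite /sem Ed'; exact: cj_refl.
  + rewrite /sem Ed'; case: g.
    * exists [:: (z, 0)]; split; last by split; [done | apply: qgood_small].
      rewrite syll_cons /= !cats0; exact: cj_refl.
    * exists [:: (0, z)]; split; last by split; [done | apply: qgood_small].
      rewrite syll_cons /= !cats0; exact: cj_refl.
  + set E := [:: z, z2 & e] in Hpos Hterm Hpar *.
    have Hp : ~~ odd (size E + k) by case: Hpar.
    have [e1 [C [Sz M]]] := norm_g g Hp isT.
    have Ho1 : ~~ odd (size e1) by move: Hp; rewrite Sz oddD (negbTE Heven) addbF.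
    have Ht1 : size e1 <= 2 \/ 1 \notin e1 by rewrite Sz M.
    have [q [Cq [Sq Gq]]] := ext_even a (all_eqmem M Hpos) Ht1 Ho1.
    exists q; split; last by split => //; rewrite addn0 -Sz.
    apply: cj_trans C _; rewrite /sem Ed'; exact: Cq.
Qed.

Lemma syll_alt p : syll_word p = alt S1 (exps p).
Proof. by elim: p => [|[x y] p IH] //; rewrite syll_cons exps_cons IH. Qed.

Lemma size_exps p : size (exps p) = 2 * size p.
Proof. by elim: p => [|[x y] p IH] //; rewrite exps_cons /= IH mulnS. Qed.

Lemma exps_pos p : (forall j, j < size p -> 1 <= (nth (0,0) p j).1 /\ 1 <= (nth (0,0) p j).2) ->
  all (fun x => 0 < x) (exps p).
Proof.
elim: p => [|[x y] p IH] // H.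
rewrite exps_cons /=; have [Hx Hy] := H 0 isT.
rewrite /= in Hx Hy; rewrite Hx Hy /=.
by apply: IH => j Hj; exact: (H j.+1).
Qed.

Lemma count_two (e : seq nat) k1 k2 : k1 <> k2 -> k1 < size e -> k2 < size e ->
  nth 0 e k1 = 1 -> nth 0 e k2 = 1 -> 2 <= count (pred1 1) e.
Proof.
have main : forall k1 k2, k1 < k2 -> k2 < size e ->
    nth 0 e k1 = 1 -> nth 0 e k2 = 1 -> 2 <= count (pred1 1) e.
  move=> a b Hab Hb Ha1 Hb1.
  rewrite -(cat_take_drop b e) count_cat (drop_nth 0 Hb) /= Hb1 eqxx /=.
  have : 1 \in take b e.
    rewrite -Ha1 -(nth_take 0 Hab); apply: mem_nth.
    by rewrite size_take Hb.
  rewrite -has_pred1 has_count; set c1 := count _ (take b e); set c2 := count _ (drop b.+1 e).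
  by move=> H; rewrite add1n addnS ltnS; apply: leq_trans H (leq_addr _ _).
move=> Hne H1 H2 E1 E2; case: (ltngtP k1 k2) => [H|H|H].
- exact: main E1 E2.
- exact: main E2 E1.
- by [].
Qed.

Lemma nth_pos (e : seq nat) i : all (fun x => 0 < x) e -> i < size e -> 0 < nth 0 e i.
Proof. by move=> /allP H Hi; apply: H; exact: mem_nth. Qed.

Lemma prev_pos e t : all (fun x => 0 < x) e -> 0 < size e -> 0 < prev_exp e t.
Proof. by move=> H Hn; apply: nth_pos H _; exact: ltn_pmod. Qed.
Lemma next_pos e t : all (fun x => 0 < x) e -> 0 < size e -> 0 < next_exp e t.
Proof. by move=> H Hn; apply: nth_pos H _; exact: ltn_pmod. Qed.

Lemma odd_le2 m : odd (2 + m) <= m.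
Proof. by case: m => // m; apply: leq_trans (leq_b1 _) _. Qed.

Unset Implicit Arguments.

Theorem proposition2p8 (p : seq (nat * nat)) :
  2 <= size p ->
  (forall j, j < size p -> 1 <= (nth (0,0) p j).1 /\ 1 <= (nth (0,0) p j).2) ->
  (2 <= num_trivial (exps p) \/
   exists k, trivial_syll (exps p) k /\
             minn (prev_exp (exps p) k) (next_exp (exps p) k) = 2) ->
  exists (a : nat) (q : seq (nat * nat)),
    braid_conj (syll_word p) (twist13_pow (3 * a) ++ syll_word q) /\
    size q < size p /\
    ((exists k, trivial_syll (exps p) k /\
                minn (prev_exp (exps p) k) (next_exp (exps p) k) = 2) \/
     (exists k1 k2, k1 <> k2 /\ isolated_syll (exps p) k1 /\ isolated_syll (exps p) k2) ->
     1 <= a) /\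
    (forall j, 1 <= j < size q -> 2 <= (nth (0,0) q j).1 /\ 2 <= (nth (0,0) q j).2) /\
    (2 <= size q ->
       1 <= (nth (0,0) q 0).1 /\ 1 <= (nth (0,0) q 0).2 /\
       (num_trivial (exps q) = 0 \/
        (num_trivial (exps q) = 1 /\
         forall k, trivial_syll (exps q) k ->
           3 <= prev_exp (exps q) k /\ 3 <= next_exp (exps q) k))).
Proof.
move=> Hr Hp Hyp.
set P := (exists k, _ /\ _) \/ (exists k1 k2, _).
set e := exps p in Hyp P *.
have Hsz : size e = 2 * size p by rewrite /e size_exps.
have Hpos : all (fun x => 0 < x) e by exact: exps_pos.
have HI : Inv 0 e by split=> //; right; rewrite Hsz addn0 oddM.
have Hn0 : 0 < size e by lia.
have Hw : syll_word p = sem 0 S1 e by rewrite syll_alt.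
rewrite Hw.
have [t [Ht Hcase]] : exists t, trivial_syll e t /\
   ((((prev_exp e t = 1) \/ (next_exp e t = 1)) /\ ~ P) \/
    (2 <= prev_exp e t /\ 2 <= next_exp e t /\
      (prev_exp e t = 2 \/ next_exp e t = 2 \/ 2 <= count (pred1 1) e))).
  have Hpr := fun t => prev_pos t Hpos Hn0.
  have Hnx := fun t => next_pos t Hpos Hn0.
  case: (classic P) => HP.
    case: HP => [[k [Hk Hm]] | [k1 [k2 [Hne [I1 I2]]]]].
      exists k; split=> //; right; have := Hpr k; have := Hnx k; lia.
    exists k1; move: I1 I2 => /and3P [T1 /eqP N1 /eqP N2] /and3P [T2 _ _].
    split=> //; right.
    have := Hpr k1; have := Hnx k1; split; first lia; split; first lia.
    right; right.
    move: T1 T2 => /andP [L1 /eqP E1] /andP [L2 /eqP E2].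
    exact: count_two Hne L1 L2 E1 E2.
  have Hnt : 2 <= num_trivial e.
    by case: Hyp => // H2; exfalso; apply: HP; left.
  have H1 : 1 \in e by rewrite -has_pred1 has_count; move: Hnt; rewrite /num_trivial; lia.
  exists (index 1 e); split; first by rewrite /trivial_syll index_mem H1 nth_index.
  set t := index 1 e.
  case: (prev_exp e t =P 1) => [E|Ne]; first by left; split=> //; left.
  case: (next_exp e t =P 1) => [E|Ne']; first by left; split=> //; right.
  right; have := Hpr t; have := Hnx t; split; first lia; split; first lia.
  by right; right.
have H3 : 3 <= size e by lia.
have [g1 [e1 [C1 [I1 [Sz1 [Hz [Hs1 Hone]]]]]]] := @move_at 0 S1 e t HI H3 Ht.
case: Hcase => [[Hpn HnP] | [Hx [Hy Hor]]].
-
  have Sz1' : size e1 + 3 <= size e by apply: Hz => //; lia.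
  have [m [g2 [e2 [C2 [I2 [Sz2 T2]]]]]] := loop g1 I1.
  have [q [Cq [Sq Gq]]] := extract g2 I2 T2.
  exists (1 + m)./2, q; split; first exact: cj_trans C1 (cj_trans C2 Cq).
  split.
    have Ho := leq_b1 (odd (1 + m)).
    move: Sq; rewrite -!divn2 => Sq; lia.
  split; first by move=> HP; exfalso; exact: HnP HP.
  exact: Gq.
- have He1 := Hone Hx Hy Hor.
  have Hs1' := Hs1 Hx Hy.
  have Ht' : trivial_syll e1 (index 1 e1) by rewrite /trivial_syll index_mem He1 nth_index.
  have [g2 [e2 [C2 [I2 [Sz2 _]]]]] := @move_at 1 g1 e1 (index 1 e1) I1 (ltac:(lia)) Ht'.
  have [m [g3 [e3 [C3 [I3 [Sz3 T3]]]]]] := loop g2 I2.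
  have [q [Cq [Sq Gq]]] := extract g3 I3 T3.
  exists (2 + m)./2, q; split; first exact: cj_trans C1 (cj_trans C2 (cj_trans C3 Cq)).
  split.
    have Ho := odd_le2 m.
    move: Sq; rewrite -!divn2 => Sq; lia.
  split; first by move=> _; rewrite -divn2; lia.
  exact: Gq.
Qed.
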